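(* Let $x,y>0$, let $\theta\in(0,\frac{\pi}{2})$, and let $\mathbf z=(xy\cos\theta,x^2,y^2)$. For $\theta\in(0,\arccos\frac{2}{\pi})$ let $\beta_0\in(1,\infty)$ be the unique solution of $$\arccos\left(\frac{-1}{\beta_0}\right)=\frac{(\beta_0-\cos\theta)\sqrt{\beta_0^2-1}}{\beta_0(\beta_0\cos\theta-1)}.$$ Let $\Lambda^*_+$ be as defined in the context. Then the following hold. - If $\theta\in(0,\arccos\frac{2}{\pi})$, then $\Lambda^*_+(\mathbf z)=\frac{x^2}{2}+\frac{y^2}{2}-1-\ln(xy)+\ln\left(\frac{\pi\beta_0(\beta_0\cos\theta-1)}{2(\beta_0-\cos\theta)^2}\right)$. - If $\theta\in[\arccos\frac{2}{\pi},\frac{\pi}{2})$, then $\Lambda^*_+(\mathbf z)=\frac{x^2}{2}+\frac{y^2}{2}-1-\ln(xy)$.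
   Context: For $\boldsymbol\lambda=(\lambda_1,\lambda_2,\lambda_3)\in\mathbb{R}^3$ let $D=\lambda_1^2-(1-2\lambda_2)(1-2\lambda_3)$, and let $$S=\{\boldsymbol\lambda:\lambda_2<\tfrac12,\ \lambda_3<\tfrac12,\ D<0\}.$$ For $\boldsymbol\lambda\in S$ put $$\Lambda(\boldsymbol\lambda)=\ln\left(\pi+2\arctan\left(\frac{\lambda_1}{\sqrt{-D}}\right)\right)-\ln\pi-\tfrac12\ln(-D).$$ This is the log moment generating function of $(\hat X\hat Y,\hat X^2,\hat Y^2)$ for independent half-normal $\hat X,\hat Y$. Define $$\Lambda^*_+(\mathbf z)=\sup_{\boldsymbol\lambda\in S,\ \lambda_1>0}\{\langle\boldsymbol\lambda,\mathbf z\rangle-\Lambda(\boldsymbol\lambda)\}.$$ *)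

(* Defs.v *)
From Stdlib Require Import Reals.
From Coquelicot Require Import Coquelicot.
Open Scope R_scope.

Definition Dlam (l1 l2 l3 : R) : R := l1 ^ 2 - (1 - 2 * l2) * (1 - 2 * l3).

Definition inS (l1 l2 l3 : R) : Prop :=
  l2 < 1 / 2 /\ l3 < 1 / 2 /\ Dlam l1 l2 l3 < 0.

(* log moment generating function, meaningful on S *)
Definition Lam (l1 l2 l3 : R) : R :=
  ln (PI + 2 * atan (l1 / sqrt (- Dlam l1 l2 l3))) - ln PI
  - (1 / 2) * ln (- Dlam l1 l2 l3).

Definition LamStarPlus (z1 z2 z3 : R) : Rbar :=
  Lub_Rbar (fun v => exists l1 l2 l3 : R,
    inS l1 l2 l3 /\ 0 < l1 /\
    v = l1 * z1 + l2 * z2 + l3 * z3 - Lam l1 l2 l3).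

Definition beta0_eq (theta b : R) : Prop :=
  acos (-1 / b) = (b - cos theta) * sqrt (b ^ 2 - 1) / (b * (b * cos theta - 1)).

(* Main.v *)
Require Import Defs.
From Stdlib Require Import Reals Lra.
From Coquelicot Require Import Coquelicot.
Open Scope R_scope.

Definition Nf (c t : R) := t * (c + cos t) - sin t * (1 + c * cos t).
Definition Gf (c t : R) := sin t / (t * (1 + c * cos t)).
Definition mf (c t : R) := 2 * c * sin t - t.

Lemma PI_gt3 : 3 < PI.
Proof. generalize PI2_3_2; lra. Qed.

Lemma incr_MVT (f f' : R -> R) a b : a < b ->
  (forall t, a <= t <= b -> derivable_pt_lim f t (f' t)) ->
  (forall t, a < t < b -> 0 < f' t) -> f a < f b.
Proof.
  intros ab Hd Hp. destruct (MVT_cor2 f f' a b ab Hd) as [t [Ht1 Ht2]].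
  specialize (Hp t Ht2). assert (0 < f' t * (b - a)) by (apply Rmult_lt_0_compat; lra). lra.
Qed.

Lemma decr_MVT (f f' : R -> R) a b : a < b ->
  (forall t, a <= t <= b -> derivable_pt_lim f t (f' t)) ->
  (forall t, a < t < b -> f' t < 0) -> f b < f a.
Proof.
  intros ab Hd Hp. destruct (MVT_cor2 f f' a b ab Hd) as [t [Ht1 Ht2]].
  specialize (Hp t Ht2). assert (0 < - f' t * (b - a)) by (apply Rmult_lt_0_compat; lra). lra.
Qed.

Lemma sc1 t : sin t ^ 2 + cos t ^ 2 = 1.
Proof. generalize (sin2_cos2 t). unfold Rsqr. lra. Qed.

Lemma dN c t : derivable_pt_lim (Nf c) t (sin t * mf c t).
Proof.
  apply is_derive_Reals. unfold Nf, mf. auto_derive; auto.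
  assert (H : c * sin t ^ 2 + c * cos t ^ 2 = c) by (transitivity (c * (sin t ^ 2 + cos t ^ 2)); [ring | rewrite sc1; ring]). lra.
Qed.

Lemma dm c t : derivable_pt_lim (mf c) t (2 * c * cos t - 1).
Proof. apply is_derive_Reals. unfold mf. auto_derive; auto. ring. Qed.

Lemma dG c t : 0 < t -> 0 < 1 + c * cos t ->
  derivable_pt_lim (Gf c) t (Nf c t / (t * (1 + c * cos t)) ^ 2).
Proof.
  intros h1 h2.
  apply is_derive_Reals. unfold Gf, Nf. auto_derive.
  - apply Rmult_integral_contrapositive; split; lra.
  - assert (H : c * t * sin t ^ 2 + c * t * cos t ^ 2 = c * t) by (transitivity (c * t * (sin t ^ 2 + cos t ^ 2)); [ring | rewrite sc1; ring]).
    field_simplify; [| lra | lra]. f_equal. lra.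
Qed.

Lemma m_decr c t t' : 0 < c -> PI / 2 <= t -> t < t' -> t' <= PI -> mf c t' < mf c t.
Proof.
  intros hc h1 h2 h3. apply (decr_MVT (mf c) (fun s => 2 * c * cos s - 1)); auto.
  - intros; apply dm.
  - intros s Hs. assert (cos s < 0) by (apply cos_lt_0; generalize PI_gt3; lra). nra.
Qed.

Lemma N_pi2 c : Nf c (PI / 2) = PI / 2 * c - 1.
Proof. unfold Nf. rewrite sin_PI2, cos_PI2. ring. Qed.

Lemma L1 c t : 2 / PI < c -> c < 1 -> PI / 2 < t -> t <= PI -> 0 <= mf c t -> 0 < Nf c t.
Proof.
  intros hc hc1 h1 h2 h3.
  assert (hpi := PI_gt3).
  assert (hc0 : 0 < c) by (apply Rlt_trans with (2 / PI); auto; apply Rdiv_lt_0_compat; lra).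
  assert (0 < Nf c (PI / 2)).
  { rewrite N_pi2. apply (Rmult_lt_compat_l PI) in hc; [|lra].
    replace (PI * (2 / PI)) with 2 in hc by (field; lra). lra. }
  assert (Nf c (PI / 2) < Nf c t); [|lra].
  apply (incr_MVT (Nf c) (fun s => sin s * mf c s)); auto.
  - intros; apply dN.
  - intros s Hs. apply Rmult_lt_0_compat. apply sin_gt_0; lra.
    assert (mf c t < mf c s) by (apply m_decr; lra). lra.
Qed.

Lemma L2 c t t' : 0 < c -> PI / 2 <= t -> t < t' -> t' <= PI -> mf c t <= 0 -> Nf c t' < Nf c t.
Proof.
  intros hc h1 h2 h3 h4.
  apply (decr_MVT (Nf c) (fun s => sin s * mf c s)); auto.
  - intros; apply dN.
  - intros s Hs. assert (mf c s < mf c t) by (apply m_decr; lra).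
    assert (0 < sin s) by (apply sin_gt_0; generalize PI_gt3; lra). nra.
Qed.

Lemma case1_sign c p : 2 / PI < c -> c < 1 -> PI / 2 < p < PI -> Nf c p = 0 ->
  (forall t, PI / 2 < t < p -> 0 < Nf c t) /\ (forall t, p < t < PI -> Nf c t < 0).
Proof.
  intros hc hc1 hp hN.
  assert (hpi := PI_gt3).
  assert (hc0 : 0 < c) by (apply Rlt_trans with (2 / PI); auto; apply Rdiv_lt_0_compat; lra).
  assert (hm : mf c p < 0).
  { destruct (Rlt_or_le (mf c p) 0) as [h|h]; auto.
    generalize (L1 c p hc hc1 ltac:(lra) ltac:(lra) h). lra. }
  split.
  - intros t Ht. destruct (Rle_or_lt 0 (mf c t)) as [h|h].
    + apply L1; auto; lra.
    + generalize (L2 c t p hc0 ltac:(lra) ltac:(lra) ltac:(lra) ltac:(lra)). lra.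
  - intros t Ht. generalize (L2 c p t hc0 ltac:(lra) ltac:(lra) ltac:(lra) ltac:(lra)). lra.
Qed.

Lemma case2_sign c t : 0 < c -> c <= 2 / PI -> PI / 2 < t < PI -> Nf c t < 0.
Proof.
  intros hc hc2 Ht. assert (hpi := PI_gt3).
  assert (h2 : c * PI <= 2).
  { apply (Rmult_le_compat_r PI) in hc2; [|lra]. replace (2 / PI * PI) with 2 in hc2 by (field; lra). lra. }
  assert (Nf c t < Nf c (PI / 2)).
  { apply L2; try lra. unfold mf. rewrite sin_PI2. 
    assert (c * PI * PI <= 2 * PI) by nra. nra. }
  rewrite N_pi2 in H. lra.
Qed.

Lemma Hpos c t : 0 < c < 1 -> 0 < 1 + c * cos t.
Proof. intros hc. generalize (COS_bound t); intros [h1 h2]. nra. Qed.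

Lemma dG' c a b : 0 < c < 1 -> 0 < a ->
  forall t, a <= t <= b -> derivable_pt_lim (Gf c) t (Nf c t / (t * (1 + c * cos t)) ^ 2).
Proof. intros hc ha t Ht. apply dG. lra. apply Hpos; auto. Qed.

Lemma sq_pos c t : 0 < c < 1 -> 0 < t -> 0 < (t * (1 + c * cos t)) ^ 2.
Proof. intros hc ht. generalize (Hpos c t hc); intro. apply pow_lt. nra. Qed.

Lemma G_case1 c p t : 2 / PI < c -> c < 1 -> PI / 2 < p < PI -> Nf c p = 0 ->
  PI / 2 < t < PI -> Gf c t <= Gf c p.
Proof.
  intros hc hc1 hp hN Ht. assert (hpi := PI_gt3).
  assert (hc0 : 0 < c) by (apply Rlt_trans with (2 / PI); auto; apply Rdiv_lt_0_compat; lra).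
  destruct (case1_sign c p hc hc1 hp hN) as [A B].
  destruct (Rtotal_order t p) as [h|[h|h]].
  - left. apply (incr_MVT (Gf c) _ t p h (dG' c t p ltac:(lra) ltac:(lra))).
    intros s Hs. apply Rdiv_lt_0_compat. apply A; lra. apply sq_pos; lra.
  - subst; lra.
  - left. apply (decr_MVT (Gf c) _ p t h (dG' c p t ltac:(lra) ltac:(lra))).
    intros s Hs. assert (Nf c s < 0) by (apply B; lra).
    assert (0 < (s * (1 + c * cos s)) ^ 2) by (apply sq_pos; lra).
    unfold Rdiv. assert (0 < / (s * (1 + c * cos s)) ^ 2) by (apply Rinv_0_lt_compat; auto). nra.
Qed.

Lemma G_case2 c t : 0 < c -> c <= 2 / PI -> PI / 2 < t < PI -> Gf c t <= Gf c (PI / 2).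
Proof.
  intros hc hc2 Ht. assert (hpi := PI_gt3).
  assert (c < 1). { assert (2 / PI < 1); [|lra]. apply (Rmult_lt_reg_r PI); [lra|].
    replace (2 / PI * PI) with 2 by (field; lra). lra. }
  left. apply (decr_MVT (Gf c) _ (PI / 2) t ltac:(lra) (dG' c (PI / 2) t ltac:(lra) ltac:(lra))).
  intros s Hs. assert (Nf c s < 0) by (apply case2_sign; auto; lra).
  assert (0 < (s * (1 + c * cos s)) ^ 2) by (apply sq_pos; lra).
  unfold Rdiv. assert (0 < / (s * (1 + c * cos s)) ^ 2) by (apply Rinv_0_lt_compat; auto). nra.
Qed.
Definition Bf (c t : R) := ln PI + ln (sin t) - ln (2 * t) - ln (1 + c * cos t).
Definition V0 (x y : R) := x ^ 2 / 2 + y ^ 2 / 2 - 1 - ln (x * y).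
Definition Eset (x y c : R) := fun v => exists l1 l2 l3 : R,
    inS l1 l2 l3 /\ 0 < l1 /\
    v = l1 * (x * y * c) + l2 * x ^ 2 + l3 * y ^ 2 - Lam l1 l2 l3.

Lemma ln_le_xm1 q : 0 < q -> ln q <= q - 1.
Proof.
  intros hq. rewrite <- (ln_exp (q - 1)). apply ln_le; auto.
  destruct (Req_dec (q - 1) 0) as [e|e].
  - rewrite e, exp_0. lra.
  - generalize (exp_ineq1 _ e). lra.
Qed.

Lemma ln_sqrt' E : 0 < E -> ln (sqrt E) = ln E / 2.
Proof.
  intros hE. assert (hs : 0 < sqrt E) by (apply sqrt_lt_R0; auto).
  replace (ln E) with (ln (sqrt E * sqrt E)) by (rewrite sqrt_sqrt; lra).
  rewrite ln_mult; auto. lra.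
Qed.

Lemma bound x y c v : 0 < x -> 0 < y -> 0 < c < 1 -> Eset x y c v ->
  exists t, PI / 2 < t < PI /\ v <= V0 x y + Bf c t.
Proof.
  intros hx hy hc [l1 [l2 [l3 [[h2 [h3 hD]] [hl1 ->]]]]].
  assert (hpi := PI_gt3).
  set (a := 1 - 2 * l2). set (b := 1 - 2 * l3).
  set (E := - Dlam l1 l2 l3).
  assert (hE : 0 < E) by (unfold E; lra).
  assert (hEe : E = a * b - l1 ^ 2) by (unfold E, a, b, Dlam; ring).
  assert (ha : 0 < a) by (unfold a; lra). assert (hb : 0 < b) by (unfold b; lra).
  set (r := l1 / sqrt E).
  assert (hsE : 0 < sqrt E) by (apply sqrt_lt_R0; auto).
  assert (hr : 0 < r) by (unfold r; apply Rdiv_lt_0_compat; auto).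
  set (t := PI / 2 + atan r).
  assert (hat : 0 < atan r < PI / 2).
  { split. rewrite <- atan_0. apply atan_increasing; auto. generalize (atan_bound r); lra. }
  exists t. split. unfold t; lra.
  assert (hsin : sin t = cos (atan r)).
  { unfold t. rewrite sin_plus, sin_PI2, cos_PI2. ring. }
  assert (hcos : cos t = - sin (atan r)).
  { unfold t. rewrite cos_plus, sin_PI2, cos_PI2. ring. }
  assert (hca : 0 < cos (atan r)) by (apply cos_gt_0; lra).
  assert (htan : sin (atan r) = r * cos (atan r)).
  { generalize (tan_atan r). unfold tan. intro h. rewrite <- h at 2. field. lra. }
  assert (hst : 0 < sin t) by lra.
  assert (hct : cos t = - r * sin t) by (rewrite hcos, htan, hsin; ring).
  assert (hr2 : r ^ 2 * E = l1 ^ 2).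
  { unfold r. unfold Rdiv. rewrite Rpow_mult_distr, pow_inv.
    rewrite <- (Rsqr_pow2 (sqrt E)), Rsqr_sqrt by lra. field. lra. }
  assert (hs2 : sin t ^ 2 * (a * b) = E).
  { generalize (sc1 t). rewrite hct. intro h. 
    assert (h1 : sin t ^ 2 * (1 + r ^ 2) = 1) by lra.
    assert (h4 : sin t ^ 2 * E + sin t ^ 2 * (r ^ 2 * E) = E).
    { transitivity (sin t ^ 2 * (1 + r ^ 2) * E). ring. rewrite h1. ring. }
    rewrite hr2 in h4. rewrite hEe in h4 |- *. lra. }
  assert (hab : 0 < a * b) by nra.
  set (K := sqrt (a * b)).
  assert (hK : 0 < K) by (apply sqrt_lt_R0; auto).
  assert (hK2 : K * K = a * b) by (apply sqrt_sqrt; lra).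
  assert (hsqE : sqrt E = K * sin t).
  { rewrite <- (sqrt_pow2 (K * sin t)) by nra. f_equal. rewrite <- hs2, <- hK2. ring. }
  assert (hl1e : l1 = - K * cos t).
  { rewrite hct. replace l1 with (r * sqrt E) by (unfold r; field; lra). rewrite hsqE. ring. }
  assert (hLam : Lam l1 l2 l3 = ln (2 * t) - ln PI - (ln K + ln (sin t))).
  { unfold Lam. fold E. fold r. replace (PI + 2 * atan r) with (2 * t) by (unfold t; field).
    rewrite <- ln_mult by auto. rewrite <- hsqE, ln_sqrt' by auto. field. }
  rewrite hLam.
  assert (hH := Hpos c t hc).
  assert (hxy : 0 < x * y) by (apply Rmult_lt_0_compat; auto).
  assert (hKxy : 0 < K * (x * y)) by (apply Rmult_lt_0_compat; auto).
  assert (hq : 0 < K * (x * y) * (1 + c * cos t)) by (apply Rmult_lt_0_compat; auto).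
  generalize (ln_le_xm1 _ hq). rewrite (ln_mult _ _ hKxy hH), (ln_mult _ _ hK hxy). intro hlq.
  assert (hamgm : 2 * K * (x * y) <= a * x ^ 2 + b * y ^ 2).
  { set (u := a * x ^ 2 + b * y ^ 2). set (w := 2 * K * (x * y)).
    assert (e : u * u - w * w = (a * x ^ 2 - b * y ^ 2) ^ 2).
    { unfold u, w. transitivity ((a * x ^ 2 - b * y ^ 2) ^ 2 + 4 * (a * b - K * K) * (x * y) ^ 2). ring.
      rewrite hK2. ring. }
    assert (0 < w) by (unfold w; lra).
    assert (0 < u) by (unfold u; apply Rplus_lt_0_compat; apply Rmult_lt_0_compat; auto; apply pow_lt; auto).
    destruct (Rle_or_lt w u) as [h|h]; [lra|].
    assert (u * u < w * w) by (apply Rmult_le_0_lt_compat; lra). generalize (pow2_ge_0 (a * x ^ 2 - b * y ^ 2)). lra. }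
  unfold V0, Bf. rewrite hl1e.
  replace l2 with ((1 - a) / 2) by (unfold a; field).
  replace l3 with ((1 - b) / 2) by (unfold b; field).
  nra.
Qed.

Lemma attain x y c t : 0 < x -> 0 < y -> 0 < c < 1 -> PI / 2 < t < PI ->
  Eset x y c (V0 x y + Bf c t).
Proof.
  intros hx hy hc Ht. assert (hpi := PI_gt3).
  assert (hH := Hpos c t hc).
  assert (hxy : 0 < x * y) by (apply Rmult_lt_0_compat; auto).
  assert (hst : 0 < sin t) by (apply sin_gt_0; lra).
  assert (hct : cos t < 0) by (apply cos_lt_0; lra).
  set (K := / (x * y * (1 + c * cos t))).
  assert (hK : 0 < K) by (unfold K; apply Rinv_0_lt_compat, Rmult_lt_0_compat; auto).
  assert (hKe : K * (x * y * (1 + c * cos t)) = 1) by (unfold K; field; lra).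
  set (a := K * y / x). set (b := K * x / y).
  assert (ha : 0 < a) by (unfold a; apply Rdiv_lt_0_compat; nra).
  assert (hb : 0 < b) by (unfold b; apply Rdiv_lt_0_compat; nra).
  exists (- K * cos t), ((1 - a) / 2), ((1 - b) / 2).
  assert (hD : Dlam (- K * cos t) ((1 - a) / 2) ((1 - b) / 2) = - (K * sin t) ^ 2).
  { unfold Dlam. replace ((1 - 2 * ((1 - a) / 2)) * (1 - 2 * ((1 - b) / 2))) with (K * K)
      by (unfold a, b; field; lra).
    generalize (sc1 t). intro h. 
    transitivity (K ^ 2 * (cos t ^ 2 - 1)). ring. rewrite <- h. ring. }
  assert (hKs : 0 < K * sin t) by (apply Rmult_lt_0_compat; auto).
  split; [|split].
  - unfold inS. rewrite hD. split; [lra|split;[lra|]].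
    assert (0 < (K * sin t) ^ 2) by (apply pow_lt; auto). lra.
  - nra.
  - unfold Lam. rewrite hD. rewrite Ropp_involutive, sqrt_pow2 by lra.
    replace (- K * cos t / (K * sin t)) with (tan (t - PI / 2)).
    2:{ unfold tan. rewrite sin_minus, cos_minus, sin_PI2, cos_PI2. field. lra. }
    rewrite atan_tan by lra.
    replace (PI + 2 * (t - PI / 2)) with (2 * t) by field.
    replace (ln ((K * sin t) ^ 2)) with (2 * (ln K + ln (sin t))).
    2:{ rewrite ln_pow by auto. rewrite ln_mult by auto. simpl. ring. }
    unfold K at 2. rewrite ln_Rinv by (apply Rmult_lt_0_compat; auto).
    rewrite (ln_mult (x * y) _ hxy hH).
    unfold V0, Bf.
    assert (e1 : a * x ^ 2 = K * (x * y)) by (unfold a; field; lra).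
    assert (e2 : b * y ^ 2 = K * (x * y)) by (unfold b; field; lra).
    transitivity (x ^ 2 / 2 + y ^ 2 / 2 - K * (x * y * (1 + c * cos t)) - ln (x * y) + ln PI + ln (sin t) - ln (2 * t) - ln (1 + c * cos t)).
    + rewrite hKe. ring.
    + replace ((1 - a) / 2 * x ^ 2) with (x ^ 2 / 2 - a * x ^ 2 / 2) by field.
      replace ((1 - b) / 2 * y ^ 2) with (y ^ 2 / 2 - b * y ^ 2 / 2) by field.
      rewrite e1, e2. field.
Qed.

Lemma BG c t : 0 < c < 1 -> 0 < t < PI ->
  Bf c t = ln (PI * sin t / (2 * t * (1 + c * cos t))).
Proof.
  intros hc ht. assert (hpi := PI_gt3). assert (hH := Hpos c t hc).
  assert (hs : 0 < sin t) by (apply sin_gt_0; lra).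
  unfold Bf. rewrite ln_div, !ln_mult; try lra; try nra.
Qed.

Lemma approx c eps : 0 < c < 1 -> 0 < eps -> exists t, PI / 2 < t < PI /\ - eps < Bf c t.
Proof.
  intros hc he. assert (hpi := PI_gt3).
  set (w := Rmin (1 / 2) (eps / 2)).
  assert (hw : 0 < w <= 1 / 2 /\ w <= eps / 2).
  { unfold w. split; [split|]. apply Rmin_pos; lra. apply Rmin_l. apply Rmin_r. }
  exists (PI / 2 + w). split; [lra|].
  set (t := PI / 2 + w).
  rewrite BG; [|auto|unfold t; lra].
  assert (hs : sin t = cos w) by (unfold t; rewrite sin_plus, sin_PI2, cos_PI2; ring).
  assert (hcw : 1 - w ^ 2 / 2 <= cos w).
  { destruct (COS w) as [h _]; try lra. unfold cos_lb, cos_approx in h. simpl in h.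
    unfold tg_alt, cos_term in h. simpl in h. 
    assert (w ^ 6 / 720 <= w ^ 4 / 24). { assert (w ^ 2 <= 1) by nra.
      assert (0 <= w ^ 4) by (apply pow_le; lra). 
      replace (w ^ 6) with (w ^ 4 * w ^ 2) by ring. nra. }
    simpl in *. lra. }
  assert (hct : cos t < 0) by (apply cos_lt_0; unfold t; lra).
  assert (hH := Hpos c t hc).
  set (Q := (1 - w ^ 2 / 2) / (1 + w)).
  assert (hQ : 0 < Q) by (unfold Q; apply Rdiv_lt_0_compat; nra).
  assert (hQle : Q <= PI * sin t / (2 * t * (1 + c * cos t))).
  { rewrite hs. assert (h1 : 1 + c * cos t <= 1) by (destruct hc; nra).
    assert (hY : 0 < 2 * t * (1 + c * cos t)) by (apply Rmult_lt_0_compat; [unfold t; lra | exact hH]).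
    assert (hQ1 : Q * (1 + w) = 1 - w ^ 2 / 2) by (unfold Q; field; lra).
    assert (hk : Q * (PI + 2 * w) <= (1 - w ^ 2 / 2) * PI).
    { rewrite <- hQ1. assert (0 <= Q * (PI * w - 2 * w)) by (apply Rmult_le_pos; nra). nra. }
    assert (hk2 : Q * (2 * t * (1 + c * cos t)) <= Q * (PI + 2 * w)).
    { apply Rmult_le_compat_l; [lra|]. unfold t in *. nra. }
    assert (hk3 : (1 - w ^ 2 / 2) * PI <= PI * cos w) by nra.
    set (Y := 2 * t * (1 + c * cos t)) in *. replace Q with (Q * Y / Y) by (field; lra).
    unfold Rdiv. apply Rmult_le_compat_r. apply Rlt_le, Rinv_0_lt_compat; auto. lra. }
  apply Rlt_le_trans with (ln Q); [| apply ln_le; auto].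
  assert (hinv : ln (/ Q) <= / Q - 1) by (apply ln_le_xm1, Rinv_0_lt_compat; auto).
  rewrite ln_Rinv in hinv by auto.
  assert (/ Q - 1 < eps); [|lra].
  unfold Q. rewrite Rinv_div.
  assert (hd : 7 / 8 <= 1 - w ^ 2 / 2) by nra.
  replace ((1 + w) / (1 - w ^ 2 / 2) - 1) with ((w + w ^ 2 / 2) * / (1 - w ^ 2 / 2)) by (field; lra).
  assert (hi1 : 0 < / (1 - w ^ 2 / 2)) by (apply Rinv_0_lt_compat; lra).
  assert (hi2 : / (1 - w ^ 2 / 2) <= 8 / 7).
  { replace (8 / 7) with (/ (7 / 8)) by field. apply Rinv_le_contravar; lra. }
  assert (hi3 : w + w ^ 2 / 2 <= 5 / 4 * w) by nra.
  assert (0 <= w + w ^ 2 / 2) by nra.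
  apply Rle_lt_trans with ((5 / 4 * w) * (8 / 7)). 
  apply Rmult_le_compat; lra. lra.
Qed.

Lemma Bf_le c t t' : 0 < c < 1 -> 0 < t < PI -> 0 < t' < PI -> Gf c t <= Gf c t' -> Bf c t <= Bf c t'.
Proof.
  intros hc ht ht' hG. assert (hpi := PI_gt3).
  rewrite !BG by auto.
  assert (e : forall s, 0 < s < PI -> PI * sin s / (2 * s * (1 + c * cos s)) = PI / 2 * Gf c s).
  { intros s hs. unfold Gf. assert (hH := Hpos c s hc). field. split; lra. }
  rewrite !e by auto. apply ln_le.
  - assert (0 < Gf c t); [|nra]. unfold Gf. apply Rdiv_lt_0_compat. apply sin_gt_0; lra.
    assert (hH := Hpos c t hc). nra.
  - apply Rmult_le_compat_l; lra.
Qed.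

Lemma Bf_pi2 c : Bf c (PI / 2) = 0.
Proof.
  unfold Bf. rewrite sin_PI2, cos_PI2, ln_1. replace (2 * (PI / 2)) with PI by field.
  replace (1 + c * 0) with 1 by ring. rewrite ln_1. ring.
Qed.

Lemma cos_range theta : 0 < theta < PI / 2 -> 0 < cos theta < 1.
Proof.
  intros h. assert (hpi := PI_gt3). split. apply cos_gt_0; lra.
  rewrite <- cos_0. apply cos_decreasing_1; lra.
Qed.

Lemma beta_char c b : 0 < c < 1 -> 1 < b ->
  acos (-1 / b) = (b - c) * sqrt (b ^ 2 - 1) / (b * (b * c - 1)) ->
  PI / 2 < acos (-1 / b) < PI /\ Nf c (acos (-1 / b)) = 0 /\ cos (acos (-1 / b)) = -1 / b.
Proof.
  intros hc hb he. assert (hpi := PI_gt3).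
  set (p := acos (-1 / b)) in *.
  assert (hC : cos p = -1 / b).
  { unfold p. apply cos_acos. split.
    - apply (Rmult_le_reg_r b); [lra|]. unfold Rdiv. rewrite Rmult_assoc, Rinv_l by lra. lra.
    - assert (0 < 1 / b) by (apply Rdiv_lt_0_compat; lra). unfold Rdiv in *. lra. }
  assert (hCn : -1 < cos p < 0).
  { rewrite hC. split.
    - apply (Rmult_lt_reg_r b); [lra|]. unfold Rdiv. rewrite Rmult_assoc, Rinv_l by lra. lra.
    - assert (0 < 1 / b) by (apply Rdiv_lt_0_compat; lra). unfold Rdiv in *. lra. }
  assert (hp : PI / 2 < p < PI).
  { destruct (acos_bound (-1 / b)) as [h1 h2]. fold p in h1, h2. split.
    - destruct (Rle_or_lt p (PI / 2)) as [h|h]; auto.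
      assert (0 <= cos p) by (apply cos_ge_0; lra). lra.
    - destruct h2 as [h|h]; auto. rewrite h, cos_PI in hCn. lra. }
  assert (hS : 0 < sin p) by (apply sin_gt_0; lra).
  assert (hsq : sqrt (b ^ 2 - 1) = sin p * b).
  { rewrite <- (sqrt_pow2 (sin p * b)) by nra. f_equal.
    assert (e1 : cos p * b = -1) by (rewrite hC; field; lra).
    generalize (sc1 p). intro h.
    transitivity (b ^ 2 * (sin p ^ 2 + cos p ^ 2) - (cos p * b) ^ 2). rewrite e1, h. ring. ring. }
  rewrite hsq in he.
  split; [auto|split; [|auto]].
  destruct (Req_dec (b * (b * c - 1)) 0) as [hz|hz].
  - rewrite hz in he. unfold Rdiv in he. rewrite Rinv_0 in he. lra.
  - assert (he2 : p * (b * (b * c - 1)) = (b - c) * (sin p * b)) by (assert (b * c - 1 <> 0) by (intro q; apply hz; rewrite q; ring); rewrite he at 1; field; split; auto; lra).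
    unfold Nf. rewrite hC.
    apply (Rmult_eq_reg_r (b * b)); [| nra].
    transitivity (p * (b * (b * c - 1)) - (b - c) * (sin p * b)).
    field. lra. rewrite he2. ring.
Qed.

Lemma N_cont c : continuity (fun t => - Nf c t).
Proof.
  intro t. apply derivable_continuous_pt.
  exists (- (sin t * mf c t)). apply derivable_pt_lim_opp, dN.
Qed.

Lemma beta_exists c : 2 / PI < c -> c < 1 -> exists b, 1 < b /\
  acos (-1 / b) = (b - c) * sqrt (b ^ 2 - 1) / (b * (b * c - 1)).
Proof.
  intros hc hc1. assert (hpi := PI_gt3).
  assert (hc0 : 0 < c) by (apply Rlt_trans with (2 / PI); auto; apply Rdiv_lt_0_compat; lra).
  assert (hN2 : 0 < Nf c (PI / 2)).
  { rewrite N_pi2. apply (Rmult_lt_compat_l PI) in hc; [|lra].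
    replace (PI * (2 / PI)) with 2 in hc by (field; lra). lra. }
  assert (hNp : Nf c PI < 0) by (unfold Nf; rewrite sin_PI, cos_PI; nra).
  destruct (IVT (fun t => - Nf c t) (PI / 2) PI (N_cont c) ltac:(lra) ltac:(lra) ltac:(lra)) as [z [hz hNz]].
  assert (hNz' : Nf c z = 0) by lra.
  assert (hz' : PI / 2 < z < PI).
  { split; destruct hz as [h1 h2]; [destruct h1 as [h|h]|destruct h2 as [h|h]]; auto;
    subst; lra. }
  assert (hS : 0 < sin z) by (apply sin_gt_0; lra).
  assert (hCn : cos z < 0) by (apply cos_lt_0; lra).
  assert (hC1 : -1 < cos z) by (generalize (sc1 z); nra).
  assert (hcC : c + cos z <> 0).
  { intro q. unfold Nf in hNz'. rewrite q in hNz'. assert (hH := Hpos c z (conj hc0 hc1)). nra. }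
  exists (-1 / cos z). split.
  - apply (Rmult_lt_reg_r (- cos z)); [lra|]. replace (-1 / cos z * - cos z) with 1 by (field; lra). lra.
  - replace (-1 / (-1 / cos z)) with (cos z) by (field; lra).
    rewrite acos_cos by lra.
    set (b := -1 / cos z).
    assert (e1 : cos z * b = -1) by (unfold b; field; lra).
    assert (hsq : sqrt (b ^ 2 - 1) = sin z * b).
    { assert (0 < b) by (unfold b; apply Rdiv_neg_neg; lra).
      rewrite <- (sqrt_pow2 (sin z * b)) by nra. f_equal.
      generalize (sc1 z). intro h.
      transitivity (b ^ 2 * (sin z ^ 2 + cos z ^ 2) - (cos z * b) ^ 2). rewrite e1, h. ring. ring. }
    rewrite hsq.
    assert (hb0 : b <> 0) by (intro q; rewrite q in e1; lra). clearbody b.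
    assert (hbc : b * c - 1 = b * (c + cos z)) by (transitivity (b * c + cos z * b); [rewrite e1; ring | ring]).
    rewrite hbc. unfold Nf in hNz'.
    apply (Rmult_eq_reg_r (b * (b * (c + cos z)))).
    2:{ repeat (apply Rmult_integral_contrapositive; split); auto. }
    unfold Rdiv. rewrite Rmult_assoc, Rinv_l.
    2:{ repeat (apply Rmult_integral_contrapositive; split); auto. }
    transitivity (b * b * (z * (c + cos z))). ring.
    replace (z * (c + cos z)) with (sin z * (1 + c * cos z)) by lra.
    transitivity (b * sin z * (b + c * (cos z * b))). ring. rewrite e1. ring.
Qed.

Lemma value c b p : 0 < c < 1 -> 1 < b -> PI / 2 < p < PI -> Nf c p = 0 -> cos p = -1 / b ->
  Bf c p = ln (PI * b * (b * c - 1) / (2 * (b - c) ^ 2)).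
Proof.
  intros hc hb hp hN hC. assert (hpi := PI_gt3).
  rewrite BG by (auto; lra). f_equal.
  assert (hH := Hpos c p hc).
  assert (hS : sin p = p * (c + cos p) / (1 + c * cos p)).
  { apply (Rmult_eq_reg_r (1 + c * cos p)); [| lra].
    replace (p * (c + cos p) / (1 + c * cos p) * (1 + c * cos p)) with (p * (c + cos p)) by (field; lra).
    unfold Nf in hN; lra. }
  rewrite hS, hC. rewrite hC in hH.
  assert (hbc : b - c <> 0) by lra.
  assert (hH' : 1 + c * (-1 / b) <> 0) by lra.
  field. repeat split; lra.
Qed.

Lemma LSP_eq x y theta : LamStarPlus (x * y * cos theta) (x ^ 2) (y ^ 2) = Lub_Rbar (Eset x y (cos theta)).
Proof. reflexivity. Qed.

Theorem lemma9 (x y theta : R) (hx : 0 < x) (hy : 0 < y)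
  (ht0 : 0 < theta) (ht1 : theta < PI / 2) :
  (theta < acos (2 / PI) ->
     (exists! b : R, 1 < b /\ beta0_eq theta b) /\
     (forall b : R, 1 < b -> beta0_eq theta b ->
        LamStarPlus (x * y * cos theta) (x ^ 2) (y ^ 2) =
        Finite (x ^ 2 / 2 + y ^ 2 / 2 - 1 - ln (x * y)
                + ln (PI * b * (b * cos theta - 1) / (2 * (b - cos theta) ^ 2))))) /\
  (acos (2 / PI) <= theta ->
     LamStarPlus (x * y * cos theta) (x ^ 2) (y ^ 2) =
     Finite (x ^ 2 / 2 + y ^ 2 / 2 - 1 - ln (x * y))).
Proof.
  assert (hpi := PI_gt3). rewrite !LSP_eq.
  assert (hc := cos_range theta (conj ht0 ht1)).
  set (c := cos theta) in *.
  assert (h2pi : -1 <= 2 / PI <= 1).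
  { split. assert (0 < 2 / PI) by (apply Rdiv_lt_0_compat; lra). lra.
    apply (Rmult_le_reg_r PI); [lra|]. replace (2 / PI * PI) with 2 by (field; lra). lra. }
  assert (hac := acos_bound (2 / PI)).
  assert (hcac := cos_acos _ h2pi).
  split.
  - intro hlt.
    assert (hc2 : 2 / PI < c).
    { unfold c. rewrite <- hcac. apply cos_decreasing_1; lra. }
    unfold beta0_eq. fold c.
    split.
    + destruct (beta_exists c hc2 (proj2 hc)) as [b [hb he]].
      exists b. split; [split; auto|].
      intros b' [hb' he'].
      destruct (beta_char c b hc hb he) as [hp [hN hC]].
      destruct (beta_char c b' hc hb' he') as [hp' [hN' hC']].
      destruct (case1_sign c _ hc2 (proj2 hc) hp hN) as [A B].
      assert (acos (-1 / b) = acos (-1 / b')).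
      { destruct (Rtotal_order (acos (-1 / b')) (acos (-1 / b))) as [h|[h|h]]; auto.
        - generalize (A _ (conj (proj1 hp') h)). lra.
        - generalize (B _ (conj h (proj2 hp'))). lra. }
      assert (-1 / b = -1 / b') by (rewrite <- hC, <- hC'; f_equal; auto).
      apply (Rmult_eq_reg_r (-1 / b * (-1 / b'))).
      * replace (b * (-1 / b * (-1 / b'))) with (1 / b') by (field; lra).
        replace (b' * (-1 / b * (-1 / b'))) with (1 / b) by (field; lra).
        lra.
      * apply Rmult_integral_contrapositive; split; unfold Rdiv; apply Rmult_integral_contrapositive; split;
          try lra; apply Rinv_neq_0_compat; lra.
    + intros b hb he.
      destruct (beta_char c b hc hb he) as [hp [hN hC]].
      set (p := acos (-1 / b)) in *.
      rewrite <- (value c b p hc hb hp hN hC).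
      apply is_lub_Rbar_unique. split.
      * intros v hv. destruct (bound x y c v hx hy hc hv) as [t [ht hvt]].
        simpl. apply Rle_trans with (V0 x y + Bf c t); auto.
        unfold V0 in *. apply Rplus_le_compat_l.
        apply Bf_le; auto; try lra. apply (G_case1 c p t hc2 (proj2 hc) hp hN ht).
      * intros l hl. specialize (hl _ (attain x y c p hx hy hc hp)). unfold V0 in hl. exact hl.
  - intro hge.
    assert (hc2 : c <= 2 / PI).
    { unfold c. rewrite <- hcac. destruct hge as [h|h].
      - left. apply cos_decreasing_1; lra.
      - rewrite h. lra. }
    apply is_lub_Rbar_unique. split.
    + intros v hv. destruct (bound x y c v hx hy hc hv) as [t [ht hvt]].
      simpl. apply Rle_trans with (V0 x y + Bf c t); auto.
      unfold V0 in *. assert (Bf c t <= 0); [|lra].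
      rewrite <- (Bf_pi2 c). apply Bf_le; auto; try lra. apply G_case2; auto. lra.
    + intros l hl. destruct l as [r| |].
      * simpl. destruct (Rle_or_lt (x ^ 2 / 2 + y ^ 2 / 2 - 1 - ln (x * y)) r) as [h|h]; auto.
        destruct (approx c (x ^ 2 / 2 + y ^ 2 / 2 - 1 - ln (x * y) - r) hc ltac:(lra)) as [t [ht hb]].
        specialize (hl _ (attain x y c t hx hy hc ht)). simpl in hl. unfold V0 in hl. lra.
      * simpl. auto.
      * specialize (hl _ (attain x y c (3 * PI / 4) hx hy hc ltac:(lra))). simpl in hl. contradiction.
Qed.
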